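(* Let $X$ and $Y$ be metric spaces and let $A(X)\subseteq C(X)$ and $A(Y)\subseteq C(Y)$ be adequate subspaces. If $h:\mathcal{A}X\to\mathcal{A}Y$ is a homeomorphism and $x_0\in X$, then there is a sequence $(y_n)$ in $Y$ that converges to $h(x_0)$ in $\mathcal{A}Y$.
   Context: All functions are real-valued. $A(X)\subseteq C(X)$ separates points from closed sets if for every $x\in X$ and closed $F\not\ni x$ there is $f\in A(X)$ with $f(x)=1$, $f=0$ on $F$. $A(X)$ is adequate if (a) it separates points from closed sets and contains the constants; (b) there is a continuous nondecreasing $g:\mathbb{R}\to\mathbb{R}$ with $g(t)=0$ for $t\le0$, $g(t)=1$ for $t\ge1$, and $g\circ f\in A(X)$ for all $f\in A(X)$; (c) every $f\in A(X)$ is a difference of two nonnegative elements of $A(X)$. The $A(X)$-compactification $\mathcal{A}X$ is the closure of $i(X)$ in $[-\infty,\infty]^{A(X)}$ (product of order topologies), where $i(x)(\varphi)=\varphi(x)$ is a homeomorphic embedding; $X$ is identified with $i(X)\subseteq\mathcal{A}X$. $\mathcal{A}Y$ is defined analogously from $A(Y)$. *)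

(* Defs.v *)
From HB Require Import structures.
From mathcomp Require Import all_boot all_order all_algebra.
From mathcomp Require Import all_classical all_reals all_analysis.
Unset Printing Implicit Defensive.
Import Order.TTheory GRing.Theory Num.Theory.
Import numFieldNormedType.Exports.
Local Open Scope classical_set_scope.
Local Open Scope ring_scope.

Section Adequate.
Context {R : realType} {X : topologicalType}.

Definition subspace_of_C (A : set (X -> R)) : Prop :=
  [/\ A `<=` [set f | continuous f],
      A (fun _ => 0),
      (forall f g, A f -> A g -> A (f \+ g)) &
      (forall (c : R) f, A f -> A (fun x => c * f x))].

Definition separates_points_closed (A : set (X -> R)) : Prop :=
  forall (x : X) (F : set X), closed F -> ~ F x ->
    exists2 f, A f & f x = 1 /\ (forall z, F z -> f z = 0).

Definition adequate (A : set (X -> R)) : Prop :=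
  [/\ separates_points_closed A /\ (forall c : R, A (fun _ => c)),
      (exists g : R -> R,
        [/\ continuous g,
            {homo g : s t / s <= t},
            (forall t, t <= 0 -> g t = 0),
            (forall t, 1 <= t -> g t = 1) &
            (forall f, A f -> A (g \o f))]) &
      (forall f, A f -> exists f1 f2,
         [/\ A f1, A f2, (forall x, 0 <= f1 x), (forall x, 0 <= f2 x) &
             f = f1 \- f2])].

Definition ambient (A : set (X -> R)) := {ptws set_type A -> \bar R}.

Definition evalA (A : set (X -> R)) (x : X) : ambient A :=
  fun phi => ((sval phi) x)%:E.

Definition Acompactification (A : set (X -> R)) : set (ambient A) :=
  closure (range (evalA A)).

End Adequate.

Definition homeomorphism_between {T T' : topologicalType}
  (S : set T) (S' : set T') (h : T -> T') : Prop :=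
  exists g : T' -> T,
    [/\ (forall x, S x -> S' (h x)) /\
        (forall y, S' y -> S (g y)),
        (forall x, S x -> g (h x) = x),
        (forall y, S' y -> h (g y) = y),
        {within S, continuous h} &
        {within S', continuous g}].

(* Main.v *)
Require Import Defs.
From HB Require Import structures.
From mathcomp Require Import all_boot all_order all_algebra.
From mathcomp Require Import all_classical all_reals all_analysis.
Import Order.TTheory GRing.Theory Num.Theory.
Local Open Scope classical_set_scope.
Local Open Scope ring_scope.
Lemma ereal_compact_aux (R : realType) : compact [set: \bar R].
Proof.
move=> F FF _.
have Fc : ((@contract R) @ F) `[-1, 1]%classic.
  apply: (@filterS _ F _ setT) => [x _ /=|]; last exact: filterT.
  by rewrite in_itv /= -ler_norml contract_le1.
have [c [c11 cc]] := @segment_compact R (-1) 1 _ _ Fc.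
exists (expand c); split => //.
move=> A B FA /nbhs_ballP [e e0 eB].
have : ((@contract R) @ F) ((@contract R) @` A) by apply: (@filterS _ F _ A) => // x Ax; exists x.
move=> /(cc _ (@ball _ R^o c e)) [].
  exact: (@nbhsx_ballx R R^o c e e0).
move=> _ [[a Aa <-] ca]; exists a; split => //; apply: eB.
move: ca; rewrite /ball /= /ereal_ball expandK //.
  by move: c11; rewrite /= in_itv /= inE ler_norml.
Qed.
Lemma nbhs_proj (I : eqType) (T : topologicalType) (f : {ptws I -> T}) i (U : set T) :
  nbhs (f i) U -> nbhs f [set g : {ptws I -> T} | U (g i)].
Proof. exact: (@proj_continuous I (fun _ => T) i f). Qed.

Theorem proposition4p2 (R : realType) (X Y : metricType R)
  (AX : set (X -> R)) (AY : set (Y -> R))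
  (sAX : subspace_of_C AX) (sAY : subspace_of_C AY)
  (adX : adequate AX) (adY : adequate AY)
  (h : ambient AX -> ambient AY)
  (hh : homeomorphism_between (Acompactification AX) (Acompactification AY) h)
  (x0 : X) :
  exists y : nat -> Y,
    (fun n => evalA AY (y n)) @ \oo --> h (evalA AX x0).
Proof.
have [gg [[hK gK] ghK hgK hc gc]] := hh.
set KX := Acompactification AX; set KY := Acompactification AY.
set p := h (evalA AX x0).
have x0K : KX (evalA AX x0) by apply: subset_closure; exists x0.
have pK : KY p by exact: hK.
have gp : gg p = evalA AX x0 by exact: ghK.
pose r (n : nat) : R := n.+1%:R^-1.
have r0 n : 0 < r n by rewrite invr_gt0.
case: adX => [[sepX _] _ _].
case: sAX => cAX _ _ _.
have Hf n : {f | AX f /\ f x0 = 1 /\ forall z, ~ ball x0 (r n) z -> f z = 0}.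
  have cl : closed (~` (ball x0 (r n))°) by apply: open_closedC; apply: open_interior.
  have nb : ~ (~` (ball x0 (r n))°) x0 by apply; exact: nbhsx_ballx.
  have [f Af [f1 f0]] := cid2 (sepX x0 _ cl nb).
  exists f; split => //; split => // z zb; apply: f0 => /interior_subset.
  exact: zb.
pose fsv n := proj1_sig (Hf n).
have fsA n : fsv n \in AX by apply: mem_set; exact: (proj1 (proj2_sig (Hf n))).
pose fs n : set_type AX := exist _ (fsv n) (fsA n).
have fs0 n z : ~ ball x0 (r n) z -> fsv n z = 0 by exact: (proj2 (proj2 (proj2_sig (Hf n)))).
have fs1 n : fsv n x0 = 1 by exact: (proj1 (proj2 (proj2_sig (Hf n)))).
pose Z n := [set s : ambient AX | ((2^-1)%:E < s (fs n))%E].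
have Zn n s : Z n s -> nbhs s (Z n).
  move=> Zs; apply: (@nbhs_proj _ _ s (fs n) [set e | ((2^-1)%:E < e)%E]).
  by apply: open_nbhs_nbhs; split => //; exact: open_ereal_gt_ereal.
have gc' := (subspace_continuousP KY gg).1 gc.
have : forall n, exists yn, Z n (gg (evalA AY yn)).
  move=> n.
  have nZ : nbhs (gg p) (Z n).
    apply: Zn; rewrite gp /Z /= /evalA /= fs1 lte_fin.
    by rewrite invf_lt1 // ltr1n.
  have := gc' p pK _ nZ; rewrite nbhs_simpl => /= Wp.
  have [_ [[yn _ <-] Hyn]] := pK _ Wp.
  exists yn; apply: Hyn; apply: subset_closure; by exists yn.
move=> /choice [y Hy]; exists y.
set F := (fun n => evalA AY (y n)) @ \oo.
have FK : F (range (evalA AY)).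
  by apply: (@filterS nat \oo _ setT) => [n _|]; [exists (y n)|exact: filterT].
have claim : forall q, cluster F q -> q = p.
  move=> q cq.
  have qK : KY q by move=> B nB; exact: cq FK nB.
  suff e : gg q = evalA AX x0 by rewrite -(hgK q qK) e.
  apply: functional_extensionality_dep => phi.
  apply: ereal_hausdorff => U V nU nV.
  move: nU; rewrite nbhsE; case=> O [oO Oq] OU.
  have AXphi : AX (sval phi) by apply: set_mem; exact: (svalP phi).
  have nV' : nbhs x0 (fun x => V (sval phi x)%:E).
    exact: (cAX _ AXphi x0 (fun t => V t%:E) nV).
  move: nV' => /nbhs_ballP [eps eps0 epsV].
  have nW : nbhs (gg q) [set s : ambient AX | O (s phi)].
    by apply: (@nbhs_proj _ _ (gg q) phi O); exact: open_nbhs_nbhs.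
  have := gc' q qK _ nW; rewrite nbhs_simpl => /= Mq.
  pose A := [set s | exists n, r n < eps /\ s = evalA AY (y n)].
  have FA : F A.
    apply: (@filterS nat \oo _ [set n | r n < eps]) => [n rn|].
      by exists n.
    exact: (near_infty_natSinv_lt (PosNum eps0)).
  have [_ [[n [rn ->]] Mn]] := cq A _ FA Mq.
  have ynK : KY (evalA AY (y n)) by apply: subset_closure; exists (y n).
  have Ogn := Mn ynK.
  have gnK := gK _ ynK.
  have nT : nbhs (gg (evalA AY (y n))) ([set s : ambient AX | O (s phi)] `&` Z n).
    apply: filterI; last exact: Zn.
    by apply: (@nbhs_proj _ _ _ phi O); exact: open_nbhs_nbhs.
  have [_ [[x _ <-] [Ox Zx]]] := gnK _ nT.
  exists (sval phi x)%:E; split; first exact: OU.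
  apply: epsV; apply: (@le_ball _ _ x0 (r n)); first exact: ltW.
  apply: contrapT => nb; move: Zx; rewrite /Z /= /evalA /= fs0 //.
  by rewrite lte_fin ltNge invr_ge0 ler0n.
have cT : compact [set: ambient AY].
  have -> : [set: ambient AY] = [set f : ambient AY | forall i, [set: \bar R] (f i)].
    by rewrite predeqE.
  exact: (@tychonoff _ (fun _ => \bar R) (fun _ => setT) (fun _ => ereal_compact_aux R)).
have PF : ProperFilter F by rewrite /F; exact: fmap_proper_filter.
apply: (@compact_cluster_set1 _ p F setT).
- exact: hausdorff_product.
- exact: cT.
- exact: filterT.
- exact: filterT.
- rewrite eqEsubset; split => [q /claim -> //|_ ->].
  have [q [_ cq]] := cT F PF filterT.
  by rewrite -(claim q cq).
Qed.
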